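(* Let $R\subseteq\mathbb{C}$ be a discrete subset (i.e. without accumulation points in $\mathbb{C}$). Then for each $n\in\mathbb{N}$ there are only finitely many frieze patterns over $R\setminus\{0\}$ of height $n$.
   Context: A frieze pattern of height $n$ over $S\subseteq\mathbb{C}$ is a family $(c_{i,j})_{i\in\mathbb{Z},\ i\le j\le i+n+3}$ of complex numbers such that: - $c_{i,i}=c_{i,i+n+3}=0$ and $c_{i,i+1}=c_{i,i+n+2}=1$; - $c_{i,j}\in S$ for $i+2\le j\le i+n+1$; - every adjacent $2\times2$ determinant $c_{i,j}c_{i+1,j+1}-c_{i,j+1}c_{i+1,j}$ (all entries defined) equals $1$. *)

(* Defs.v *)
From Stdlib Require Import Reals ZArith List.
Open Scope R_scope.

Definition Cplx : Type := (R * R)%type.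
Definition C0 : Cplx := (0, 0).
Definition C1 : Cplx := (1, 0).
Definition Cmul (z w : Cplx) : Cplx :=
  (fst z * fst w - snd z * snd w, fst z * snd w + snd z * fst w).
Definition Csub (z w : Cplx) : Cplx := (fst z - fst w, snd z - snd w).
Definition Cnorm (z : Cplx) : R := sqrt (fst z ^ 2 + snd z ^ 2).

Definition discrete (S : Cplx -> Prop) : Prop :=
  forall z : Cplx, exists eps : R, 0 < eps /\
    forall w : Cplx, S w -> w <> z -> eps <= Cnorm (Csub w z).

Definition nonzero_part (S : Cplx -> Prop) : Cplx -> Prop :=
  fun z => S z /\ z <> C0.

Definition indom (n : nat) (i j : Z) : Prop :=
  (i <= j <= i + Z.of_nat n + 3)%Z.

(* A frieze pattern of height n over S, as a family c indexed by Z x Z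
   (only values on the domain [indom n] are meaningful). *)
Definition frieze (n : nat) (S : Cplx -> Prop) (c : Z -> Z -> Cplx) : Prop :=
  (forall i : Z,
      c i i = C0 /\ c i (i + Z.of_nat n + 3)%Z = C0 /\
      c i (i + 1)%Z = C1 /\ c i (i + Z.of_nat n + 2)%Z = C1) /\
  (forall i j : Z, (i + 2 <= j <= i + Z.of_nat n + 1)%Z -> S (c i j)) /\
  (forall i j : Z,
      indom n i j -> indom n (i + 1) (j + 1) ->
      indom n i (j + 1) -> indom n (i + 1) j ->
      Csub (Cmul (c i j) (c (i + 1) (j + 1))%Z)
           (Cmul (c i (j + 1)%Z) (c (i + 1)%Z j)) = C1).

(* Main.v *)
Require Import Defs.
From Stdlib Require Import Reals Lra Lia ZArith List Classical ClassicalEpsilon.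
From Coquelicot Require Import Coquelicot.

Lemma Cmod_sub_ge (x y : C) : Cmod x - Cmod y <= Cmod (x - y)%C.
Proof.
  assert (H := Cmod_triangle (x - y)%C y).
  replace (x - y + y)%C with x in H by ring. lra.
Qed.

Definition sk (t u : nat) : nat := if Nat.ltb u t then u else S u.

Lemma sk_lt t u v : (u < v -> sk t u < sk t v)%nat.
Proof. unfold sk; intros; destruct (Nat.ltb_spec u t); destruct (Nat.ltb_spec v t); lia. Qed.
Lemma sk_le t u : (sk t u <= S u)%nat.
Proof. unfold sk; destruct (Nat.ltb_spec u t); lia. Qed.
Lemma sk_neq t u : sk t u <> t.
Proof. unfold sk; destruct (Nat.ltb_spec u t); lia. Qed.
Lemma sk_surj t v : v <> t -> exists u, (u <= v)%nat /\ sk t u = v.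
Proof.
  intros. destruct (Nat.ltb_spec v t).
  - exists v. unfold sk. destruct (Nat.ltb_spec v t); lia.
  - exists (pred v). unfold sk. destruct (Nat.ltb_spec (pred v) t); lia.
Qed.
Lemma sk_inv_lt t u v : (sk t u < sk t v -> u < v)%nat.
Proof. intros H. destruct (Nat.lt_ge_cases u v) as [|Hc]; auto.
  destruct (Nat.eq_dec u v). subst; lia. assert (sk t v < sk t u)%nat by (apply sk_lt; lia). lia. Qed.

Fixpoint bnd (eps : R) (k : nat) (M : R) : R :=
  match k with
  | O => M
  | S k' => Rmax M (Rmax (bnd eps k' (2*M)) (2*M*bnd eps k' (2*M)/eps))
  end.

Lemma bnd_ge eps k M : M <= bnd eps k M.
Proof. destruct k; simpl. lra. apply Rmax_l. Qed.

Definition polyhyp (k:nat) (D : nat -> nat -> C) (eps M : R) : Prop :=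
  (forall a b c d, (a<b)%nat -> (b<c)%nat -> (c<d)%nat -> (d<k)%nat ->
     (D a c * D b d = D a b * D c d + D a d * D b c)%C) /\
  (forall a b, (a<b)%nat -> (b<k)%nat -> eps <= Cmod (D a b)) /\
  (forall a, (S a < k)%nat -> Cmod (D a (S a)) <= M) /\
  ((1 < k)%nat -> Cmod (D O (k-1)%nat) <= M).

Lemma ear k D eps M : 0 < eps -> polyhyp k D eps M -> (3 <= k)%nat ->
  exists s, (S (S s) < k)%nat /\ Cmod (D s (S (S s))) <= 2*M.
Proof.
  intros He [HP [HL [HA HE]]] Hk.
  apply NNPP; intro Hn.
  assert (Hb : forall s, (S (S s) < k)%nat -> 2*M < Cmod (D s (S (S s)))).
  { intros s Hs. apply Rnot_le_lt. intro. apply Hn. exists s; auto. }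
  assert (HM : eps <= M). { apply Rle_trans with (Cmod (D O 1%nat)); [apply HL|apply HA]; lia. }
  assert (Hc : forall i, (S (S i) < k)%nat ->
     Cmod (D O (S i)) <= Cmod (D O (S (S i))) /\ 2*M < Cmod (D O (S (S i)))).
  { induction i; intros Hi.
    - assert (H1 := Hb O Hi). assert (H2 := HA O ltac:(lia)). lra.
    - destruct (IHi ltac:(lia)) as [I1 I2].
      assert (P := HP O (S i) (S (S i)) (S (S (S i))) ltac:(lia) ltac:(lia) ltac:(lia) Hi).
      assert (Q : (D O (S (S (S i))) * D (S i) (S (S i)) =
          D O (S (S i)) * D (S i) (S (S (S i))) - D O (S i) * D (S (S i)) (S (S (S i))))%C)
        by (rewrite P; ring).
      assert (Hq := f_equal Cmod Q). rewrite Cmod_mult in Hq.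
      assert (Hs := Cmod_sub_ge (D O (S (S i)) * D (S i) (S (S (S i))))%C
                      (D O (S i) * D (S (S i)) (S (S (S i))))%C).
      rewrite <- Hq, !Cmod_mult in Hs.
      assert (A1 := HA (S i) ltac:(lia)). assert (A2 := HA (S (S i)) Hi).
      assert (E := Hb (S i) Hi).
      assert (G1 := Cmod_ge_0 (D O (S i))).
      assert (G2 := Cmod_ge_0 (D O (S (S (S i))))).
      assert (G3 := Cmod_ge_0 (D (S (S i)) (S (S (S i))))).
      set (X := Cmod (D O (S (S (S i))))) in *.
      set (Y := Cmod (D O (S (S i)))) in *.
      set (Z := Cmod (D O (S i))) in *.
      set (a := Cmod (D (S i) (S (S i)))) in *.
      set (b := Cmod (D (S (S i)) (S (S (S i))))) in *.
      set (e := Cmod (D (S i) (S (S (S i))))) in *.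
      assert (Y*e - Z*b >= Y*(2*M) - Y*M). { nra. }
      assert (X*M >= X * a) by nra.
      assert (X * M > Y * M) by nra.
      assert (X > Y) by nra. lra. }
  destruct (Hc (k-3)%nat ltac:(lia)) as [_ C2].
  replace (S (S (k-3))) with (k-1)%nat in C2 by lia.
  assert (H3 := HE ltac:(lia)). lra.
Qed.

Lemma div_bound (X Y e : R) : 0 < e -> X * e <= Y -> X <= Y / e.
Proof. intros. apply Rle_div_r; lra. Qed.

Lemma poly_bound : forall k D eps M, 0 < eps -> polyhyp k D eps M ->
  forall a b, (a < b)%nat -> (b < k)%nat -> Cmod (D a b) <= bnd eps k M.
Proof.
  induction k as [|k IH]; intros D eps M He H a b Hab Hbk; [lia|].
  destruct H as [HP [HL [HA HE]]].
  assert (HM0 : 0 <= M).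
  { destruct k. lia. apply Rle_trans with (Cmod (D O 1%nat)). apply Cmod_ge_0. apply HA. lia. }
  destruct (le_lt_dec k 2) as [Hs|Hs].
  - apply Rle_trans with M; [|apply bnd_ge].
    destruct (Nat.eq_dec b (S a)). subst; apply HA; lia.
    assert (a = O /\ b = 2%nat) as [-> ->] by lia.
    replace 2%nat with (S k - 1)%nat by lia. apply HE; lia.
  - destruct (ear (S k) D eps M He (conj HP (conj HL (conj HA HE))) ltac:(lia)) as [s [Hs2 Hear]].
    set (t := S s).
    set (D' := fun u v => D (sk t u) (sk t v)).
    assert (Hph : polyhyp k D' eps (2*M)).
    { split; [|split; [|split]].
      - intros a0 b0 c0 d0 h1 h2 h3 h4. unfold D'. apply HP.
        apply sk_lt; lia. apply sk_lt; lia. apply sk_lt; lia.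
        assert (h5 := sk_le t d0). lia.
      - intros a0 b0 h1 h2. unfold D'. apply HL. apply sk_lt; lia.
        assert (h5 := sk_le t b0). lia.
      - intros a0 h1. unfold D', sk.
        destruct (Nat.ltb_spec a0 t); destruct (Nat.ltb_spec (S a0) t).
        + apply Rle_trans with M; [apply HA; lia| lra].
        + assert (a0 = s) by (unfold t in *; lia). subst a0. exact Hear.
        + lia.
        + apply Rle_trans with M; [apply HA; lia| lra].
      - intros h1. unfold D', sk.
        destruct (Nat.ltb_spec O t); [|unfold t in *; lia].
        destruct (Nat.ltb_spec (k-1) t); [unfold t in *; lia|].
        replace (S (k-1)) with (S k - 1)%nat by lia.
        apply Rle_trans with M; [apply HE; lia| lra]. }
    set (B := bnd eps k (2*M)).
    assert (HIH : forall u v, (u < v)%nat -> (v < k)%nat -> Cmod (D' u v) <= B)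
      by (intros; apply IH; auto).
    assert (HB2 : 2*M <= B) by apply bnd_ge.
    assert (HnT : forall a0 b0, (a0 < b0)%nat -> (b0 < S k)%nat -> a0 <> t -> b0 <> t ->
                  Cmod (D a0 b0) <= B).
    { intros a0 b0 h1 h2 h3 h4.
      destruct (sk_surj t a0 h3) as [u [hu1 hu2]].
      destruct (sk_surj t b0 h4) as [v [hv1 hv2]].
      subst a0 b0. apply sk_inv_lt in h1.
      assert (Hv : (v < k)%nat).
      { destruct (Nat.eq_dec v k); [|lia]. subst v. unfold sk in h2.
        destruct (Nat.ltb_spec k t); lia. }
      apply (HIH u v h1 Hv). }
    simpl bnd. fold B.
    assert (Hfin : Cmod (D a b) <= B \/ Cmod (D a b) <= M \/ Cmod (D a b) <= 2*M*B/eps).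
    { destruct (Nat.eq_dec a t); destruct (Nat.eq_dec b t); try lia.
      -
        subst a.
        destruct (Nat.eq_dec b (S t)). subst b. right; left. apply HA. lia.
        right; right. apply div_bound; auto.
        assert (P := HP s t (S t) b ltac:(unfold t; lia) ltac:(lia) ltac:(lia) Hbk).
        assert (Hq := f_equal Cmod P). rewrite Cmod_mult in Hq.
        assert (Tr := Cmod_triangle (D s t * D (S t) b)%C (D s b * D t (S t))%C).
        rewrite <- Hq, !Cmod_mult in Tr.
        assert (E1 : eps <= Cmod (D s (S t))) by (apply HL; unfold t in *; lia).
        assert (B1 : Cmod (D s t) <= M) by (apply HA; unfold t in *; lia).
        assert (B2 : Cmod (D (S t) b) <= B) by (apply HnT; unfold t in *; lia).
        assert (B3 : Cmod (D s b) <= B) by (apply HnT; unfold t in *; lia).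
        assert (B4 : Cmod (D t (S t)) <= M) by (apply HA; unfold t in *; lia).
        assert (G1 := Cmod_ge_0 (D t b)). assert (G2 := Cmod_ge_0 (D (S t) b)).
        assert (G3 := Cmod_ge_0 (D s b)). assert (G4 := Cmod_ge_0 (D s t)).
        assert (G5 := Cmod_ge_0 (D t (S t))).
        assert (Cmod (D s t) * Cmod (D (S t) b) <= M * B) by (apply Rmult_le_compat; lra).
        assert (Cmod (D s b) * Cmod (D t (S t)) <= B * M) by (apply Rmult_le_compat; lra).
        assert (Cmod (D t b) * eps <= Cmod (D t b) * Cmod (D s (S t))) by (apply Rmult_le_compat_l; lra).
        lra.
      - subst b.
        destruct (Nat.eq_dec a s). subst a. right; left. apply HA. unfold t; lia.
        right; right. apply div_bound; auto.
        assert (P := HP a s t (S t) ltac:(unfold t in *; lia) ltac:(unfold t; lia) ltac:(lia) ltac:(unfold t in *; lia)).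
        assert (Hq := f_equal Cmod P). rewrite Cmod_mult in Hq.
        assert (Tr := Cmod_triangle (D a s * D t (S t))%C (D a (S t) * D s t)%C).
        rewrite <- Hq, !Cmod_mult in Tr.
        assert (E1 : eps <= Cmod (D s (S t))) by (apply HL; unfold t in *; lia).
        assert (B1 : Cmod (D s t) <= M) by (apply HA; unfold t in *; lia).
        assert (B2 : Cmod (D a s) <= B) by (apply HnT; unfold t in *; lia).
        assert (B3 : Cmod (D a (S t)) <= B) by (apply HnT; unfold t in *; lia).
        assert (B4 : Cmod (D t (S t)) <= M) by (apply HA; unfold t in *; lia).
        assert (G1 := Cmod_ge_0 (D a t)). assert (G2 := Cmod_ge_0 (D a s)).
        assert (G3 := Cmod_ge_0 (D a (S t))). assert (G4 := Cmod_ge_0 (D s t)).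
        assert (G5 := Cmod_ge_0 (D t (S t))).
        assert (Cmod (D a s) * Cmod (D t (S t)) <= B * M) by (apply Rmult_le_compat; lra).
        assert (Cmod (D a (S t)) * Cmod (D s t) <= B * M) by (apply Rmult_le_compat; lra).
        assert (Cmod (D a t) * eps <= Cmod (D a t) * Cmod (D s (S t))) by (apply Rmult_le_compat_l; lra).
        lra.
      - left. apply HnT; auto. }
    assert (R1 := Rmax_l M (Rmax B (2*M*B/eps))).
    assert (R2 := Rmax_r M (Rmax B (2*M*B/eps))).
    assert (R3 := Rmax_l B (2*M*B/eps)).
    assert (R4 := Rmax_r B (2*M*B/eps)).
    lra.
Qed.

Lemma Cmul_eq z w : Cmul z w = Cmult z w. Proof. reflexivity. Qed.
Lemma Csub_eq z w : Csub z w = Cminus z w. Proof. reflexivity. Qed.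
Lemma C0_eq : Defs.C0 = RtoC 0. Proof. reflexivity. Qed.
Lemma C1_eq : Defs.C1 = RtoC 1. Proof. reflexivity. Qed.
Lemma Cnorm_eq z : Cnorm z = Cmod z. Proof. reflexivity. Qed.
Lemma C1_neq_0 : RtoC 1 <> RtoC 0.
Proof. intro H. injection H. lra. Qed.

Section Fr.
Variable n : nat.
Variable Sset : Cplx -> Prop.
Hypothesis HS : forall w, Sset w -> w <> Defs.C0.
Variable c : Z -> Z -> Cplx.
Hypothesis Hf : frieze n Sset c.

Definition e (a b : nat) : C := c (Z.of_nat a) (Z.of_nat b).

Lemma e_diag a : e a a = 0%C.
Proof. destruct Hf as [Hb _]. unfold e. rewrite <- C0_eq. apply (Hb (Z.of_nat a)). Qed.
Lemma e_end a : e a (a+n+3) = 0%C.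
Proof. destruct Hf as [Hb _]. unfold e. rewrite <- C0_eq.
  replace (Z.of_nat (a+n+3)) with (Z.of_nat a + Z.of_nat n + 3)%Z by lia. apply (Hb (Z.of_nat a)). Qed.
Lemma e_one a : e a (S a) = 1%C.
Proof. destruct Hf as [Hb _]. unfold e. rewrite <- C1_eq.
  replace (Z.of_nat (S a)) with (Z.of_nat a + 1)%Z by lia. apply (Hb (Z.of_nat a)). Qed.
Lemma e_one' a : e a (a+n+2) = 1%C.
Proof. destruct Hf as [Hb _]. unfold e. rewrite <- C1_eq.
  replace (Z.of_nat (a+n+2)) with (Z.of_nat a + Z.of_nat n + 2)%Z by lia. apply (Hb (Z.of_nat a)). Qed.
Lemma e_int a b : (a+2 <= b)%nat -> (b <= a+n+1)%nat -> Sset (e a b).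
Proof. destruct Hf as [_ [Hs _]]. intros. unfold e. apply Hs. lia. Qed.
Lemma e_nz a b : (a+1 <= b)%nat -> (b <= a+n+2)%nat -> e a b <> 0%C.
Proof.
  intros h1 h2. destruct (Nat.eq_dec b (S a)). subst. rewrite e_one. apply C1_neq_0.
  destruct (Nat.eq_dec b (a+n+2)). subst. rewrite e_one'. apply C1_neq_0.
  rewrite <- C0_eq. apply HS. apply e_int; lia.
Qed.
Lemma e_det a b : (a+1 <= b)%nat -> (b <= a+n+2)%nat ->
  (e a b * e (S a) (S b) - e a (S b) * e (S a) b = 1)%C.
Proof.
  destruct Hf as [_ [_ Hd]]. intros. unfold e. rewrite <- C1_eq.
  replace (Z.of_nat (S a)) with (Z.of_nat a + 1)%Z by lia.
  replace (Z.of_nat (S b)) with (Z.of_nat b + 1)%Z by lia.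
  apply Hd; unfold indom; lia.
Qed.

Lemma mul_cancel (x u v : C) : x <> 0%C -> (x * u = x * v)%C -> u = v.
Proof. intros Hx H. replace u with (/x * (x*u))%C by (field; auto).
  rewrite H. field; auto. Qed.

Lemma e_rec_aux : forall d a, (a + d + 2 <= a + n + 3)%nat ->
  (e a (S (S (a+d))) + e a (a+d) = e (a+d) (S (S (a+d))) * e a (S (a+d)))%C.
Proof.
  induction d; intros a Hd.
  - rewrite Nat.add_0_r, e_diag, e_one. ring.
  - replace (a + S d)%nat with (S a + d)%nat by lia.
    set (p := (S a + d)%nat) in *.
    assert (IHa := IHd (S a) ltac:(lia)). fold p in IHa.
    assert (h1 := e_det a (S p) ltac:(unfold p; lia) ltac:(unfold p; lia)).
    assert (h2 := e_det a p ltac:(unfold p; lia) ltac:(unfold p; lia)).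
    apply (mul_cancel (e (S a) (S p))). apply e_nz; unfold p; lia.
    assert (HA : (e (S a) (S p) * e a (S (S p)) = e a (S p) * e (S a) (S (S p)) - 1)%C)
      by (rewrite <- h1; ring).
    assert (HB : (e (S a) (S p) * e a p = 1 + e a (S p) * e (S a) p)%C)
      by (rewrite <- h2; ring).
    transitivity (e a (S p) * (e (S a) (S (S p)) + e (S a) p))%C.
    + rewrite Cmult_plus_distr_l, HA, HB. ring.
    + rewrite IHa. ring.
Qed.

Lemma e_rec a p : (a <= p)%nat -> (p + 2 <= a + n + 3)%nat ->
  (e a (S (S p)) + e a p = e p (S (S p)) * e a (S p))%C.
Proof. intros. replace p with (a + (p - a))%nat by lia. apply e_rec_aux. lia. Qed.

Lemma e_wr_aux : forall d a b, (a < b)%nat -> (b + d <= a + n + 2)%nat ->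
  (e a (b+d) * e b (S (b+d)) - e b (b+d) * e a (S (b+d)) = e a b)%C.
Proof.
  induction d; intros a b Hab H.
  - rewrite Nat.add_0_r, e_diag, e_one. ring.
  - replace (b + S d)%nat with (S (b + d)) by lia.
    set (p := (b + d)%nat) in *.
    assert (I := IHd a b Hab ltac:(unfold p in *; lia)).
    assert (ra := e_rec a p ltac:(unfold p; lia) ltac:(unfold p in *; lia)).
    assert (rb := e_rec b p ltac:(unfold p; lia) ltac:(unfold p in *; lia)).
    assert (Ea : e a (S (S p)) = (e p (S (S p)) * e a (S p) - e a p)%C) by (rewrite <- ra; ring).
    assert (Eb : e b (S (S p)) = (e p (S (S p)) * e b (S p) - e b p)%C) by (rewrite <- rb; ring).
    fold p in I. rewrite Ea, Eb, <- I. ring.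
Qed.

Lemma ptolemy a b c' d : (a < b)%nat -> (b < c')%nat -> (c' <= d)%nat -> (d <= a + n + 3)%nat ->
  (e a c' * e b d = e a b * e c' d + e a d * e b c')%C.
Proof.
  intros h1 h2 h3 h4.
  set (G := fun x => (e a c' * e b x - (e a b * e c' x + e a x * e b c'))%C).
  assert (K : forall k, (c' + k + 1 <= a + n + 3)%nat -> G (c'+k)%nat = 0%C /\ G (c'+k+1)%nat = 0%C).
  { induction k; intros hk.
    - rewrite Nat.add_0_r. unfold G. split.
      + rewrite e_diag. ring.
      + replace (c' + 1)%nat with (S c') by lia. rewrite e_one.
        assert (W := e_wr_aux (c' - b) a b ltac:(lia) ltac:(lia)).
        replace (b + (c' - b))%nat with c' in W by lia.
        rewrite <- W. ring.
    - destruct (IHk ltac:(lia)) as [g1 g2]. split.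
      + replace (c' + S k)%nat with (c' + k + 1)%nat by lia. exact g2.
      + set (p := (c' + k)%nat) in *.
        replace (c' + S k + 1)%nat with (S (S p)) by (unfold p; lia).
        replace (p + 1)%nat with (S p) in g2 by lia.
        assert (ra := e_rec a p ltac:(unfold p; lia) ltac:(unfold p in *; lia)).
        assert (rb := e_rec b p ltac:(unfold p; lia) ltac:(unfold p in *; lia)).
        assert (rc := e_rec c' p ltac:(unfold p; lia) ltac:(unfold p in *; lia)).
        unfold G in *.
        assert (Ea : e a (S (S p)) = (e p (S (S p)) * e a (S p) - e a p)%C) by (rewrite <- ra; ring).
        assert (Eb : e b (S (S p)) = (e p (S (S p)) * e b (S p) - e b p)%C) by (rewrite <- rb; ring).
        assert (Ec : e c' (S (S p)) = (e p (S (S p)) * e c' (S p) - e c' p)%C) by (rewrite <- rc; ring).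
        rewrite Ea, Eb, Ec.
        transitivity (e p (S (S p)) * (e a c' * e b (S p) - (e a b * e c' (S p) + e a (S p) * e b c'))
                        - (e a c' * e b p - (e a b * e c' p + e a p * e b c')))%C.
        ring. rewrite g1, g2. ring. }
  destruct (Nat.eq_dec d c').
  - subst d. rewrite e_diag. ring.
  - assert (g := proj2 (K (d - c' - 1)%nat ltac:(lia))).
    replace (c' + (d - c' - 1) + 1)%nat with d in g by lia.
    unfold G in g; cbv beta in g.
    transitivity ((e a c' * e b d - (e a b*e c' d + e a d*e b c')) + (e a b*e c' d + e a d*e b c'))%C;
      [ring | rewrite g; ring].
Qed.

End Fr.

Lemma Cmod_le_abs (z : C) : Cmod z <= Rabs (fst z) + Rabs (snd z).
Proof.
  unfold Cmod. assert (h1 := Rabs_pos (fst z)). assert (h2 := Rabs_pos (snd z)).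
  rewrite <- (sqrt_pow2 (Rabs (fst z) + Rabs (snd z))) by lra.
  apply sqrt_le_1_alt. rewrite <- (pow2_abs (fst z)), <- (pow2_abs (snd z)). nra.
Qed.

Lemma fin_disc (Rs : Cplx -> Prop) : discrete Rs -> forall B : R,
  exists L : list Cplx, forall w, Rs w -> Cmod w <= B -> In w L.
Proof.
  intros Hd B.
  set (epsf := fun z => proj1_sig (constructive_indefinite_description _ (Hd z))).
  assert (Hep : forall z, 0 < epsf z /\ forall w, Rs w -> w <> z -> epsf z <= Cnorm (Csub w z)).
  { intro z. unfold epsf. destruct (constructive_indefinite_description _ (Hd z)). simpl. auto. }
  set (tz := fun t : Compactness.Tn 2 R => (fst t, fst (snd t)) : Cplx).
  assert (Hpos : forall t, 0 < epsf (tz t) / 2) by (intro t; destruct (Hep (tz t)); lra).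
  set (delta := fun t => mkposreal _ (Hpos t)).
  set (a := (-B, (-B, tt)) : Compactness.Tn 2 R).
  set (b := (B, (B, tt)) : Compactness.Tn 2 R).
  set (emb := fun w : Cplx => (fst w, (snd w, tt)) : Compactness.Tn 2 R).
  assert (Key : forall w t, Rs w -> close_n 2 (delta t) (emb w) t -> w = tz t).
  { intros w t Hw Hc. destruct t as [t1 [t2 []]]. simpl in Hc. destruct w as [w1 w2].
    destruct Hc as [c1 [c2 _]]. simpl in c1, c2.
    apply NNPP; intro Hne. destruct (Hep (tz (t1, (t2, tt)))) as [_ H2].
    specialize (H2 _ Hw Hne). simpl in H2.
    assert (H3 := Cmod_le_abs (w1 - t1, w2 - t2)). simpl in H3.
    unfold tz in *. simpl in *.
    assert (E : Cnorm (Csub (w1, w2) (t1, t2)) = Cmod (w1 - t1, w2 - t2)) by reflexivity.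
    lra. }
  set (P := fun t w => Rs w /\ close_n 2 (delta t) (emb w) t).
  set (pick := fun t => match excluded_middle_informative (exists w, P t w) with
                        | left h => proj1_sig (constructive_indefinite_description _ h)
                        | right _ => Defs.C0 end).
  assert (Hpick : forall t w, P t w -> pick t = w).
  { intros t w Hw. unfold pick. destruct (excluded_middle_informative (exists w, P t w)) as [h|h].
    - destruct (constructive_indefinite_description _ h) as [w' Hw']. simpl.
      destruct Hw as [A1 A2]; destruct Hw' as [B1 B2].
      rewrite (Key w' t B1 B2), (Key w t A1 A2). reflexivity.
    - exfalso. apply h. eauto. }
  apply NNPP; intro Hn.
  apply (compactness_list 2 a b delta). intros [l Hl].
  apply Hn. exists (map pick l). intros w Hw Hb.
  assert (Hbd : bounded_n 2 a b (emb w)).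
  { assert (H1 := Rmax_Cmod w). assert (H2 := Rmax_l (Rabs (fst w)) (Rabs (snd w))).
    assert (H3 := Rmax_r (Rabs (fst w)) (Rabs (snd w))).
    simpl. destruct (Rabs_le_between (fst w) B) as [H4 _].
    destruct (Rabs_le_between (snd w) B) as [H5 _].
    split; [apply H4; lra | split; [apply H5; lra | exact I]]. }
  destruct (Hl _ Hbd) as [t [Ht1 [_ Ht3]]].
  apply in_map_iff. exists t. split; auto. apply Hpick. split; auto.
Qed.

Lemma canc_l (a x x' y : C) : a <> Defs.C0 ->
  Csub (Cmul a x) y = Defs.C1 -> Csub (Cmul a x') y = Defs.C1 -> x = x'.
Proof.
  intros Ha H1 H2. rewrite C0_eq in Ha. rewrite C1_eq, Csub_eq, Cmul_eq in H1, H2.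
  apply (mul_cancel a); auto.
  transitivity (y + 1)%C. rewrite <- H1. ring. rewrite <- H2; ring.
Qed.
Lemma canc_r (a x x' y : C) : a <> Defs.C0 ->
  Csub (Cmul x a) y = Defs.C1 -> Csub (Cmul x' a) y = Defs.C1 -> x = x'.
Proof.
  rewrite !Cmul_eq. rewrite (Cmult_comm x), (Cmult_comm x'). rewrite <- !Cmul_eq. apply canc_l.
Qed.

Section Det.
Variable n : nat.
Variable Sset : Cplx -> Prop.
Hypothesis HS : forall w, Sset w -> w <> Defs.C0.

Lemma nzZ c : frieze n Sset c -> forall i j, (i+1 <= j <= i + Z.of_nat n + 2)%Z -> c i j <> Defs.C0.
Proof.
  intros [Hb [Hs _]] i j H.
  destruct (Z.eq_dec j (i+1)). subst. rewrite (proj1 (proj2 (proj2 (Hb i)))). rewrite C1_eq, C0_eq. apply C1_neq_0.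
  destruct (Z.eq_dec j (i+Z.of_nat n+2)). subst. rewrite (proj2 (proj2 (proj2 (Hb i)))). rewrite C1_eq, C0_eq. apply C1_neq_0.
  apply HS. apply Hs. lia.
Qed.

Variables c d : Z -> Z -> Cplx.
Hypothesis Hc : frieze n Sset c.
Hypothesis Hd : frieze n Sset d.

Definition PP i := forall j, (i <= j <= i + Z.of_nat n + 3)%Z -> c i j = d i j.

Lemma PP_conv i : (forall K, (K <= n+3)%nat -> c i (i + Z.of_nat K)%Z = d i (i + Z.of_nat K)%Z) -> PP i.
Proof. intros H j Hj. replace j with (i + Z.of_nat (Z.to_nat (j - i)))%Z by lia. apply H. lia. Qed.

Lemma fwd i : PP i -> PP (i+1).
Proof.
  intros HP. apply PP_conv. induction K as [|K IH]; intros HK.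
  - replace (i + 1 + Z.of_nat 0)%Z with (i+1)%Z by lia.
    rewrite (proj1 (proj1 Hc (i+1)%Z)), (proj1 (proj1 Hd (i+1)%Z)). reflexivity.
  - destruct (Nat.eq_dec (S K) (n+3)).
    + replace (i + 1 + Z.of_nat (S K))%Z with (i + 1 + Z.of_nat n + 3)%Z by lia.
      rewrite (proj1 (proj2 (proj1 Hc (i+1)%Z))), (proj1 (proj2 (proj1 Hd (i+1)%Z))). reflexivity.
    + set (jj := (i + 1 + Z.of_nat K)%Z).
      replace (i + 1 + Z.of_nat (S K))%Z with (jj + 1)%Z by (unfold jj; lia).
      assert (h1 := proj2 (proj2 Hc) i jj ltac:(unfold indom, jj; lia) ltac:(unfold indom, jj; lia)
                       ltac:(unfold indom, jj; lia) ltac:(unfold indom, jj; lia)).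
      assert (h2 := proj2 (proj2 Hd) i jj ltac:(unfold indom, jj; lia) ltac:(unfold indom, jj; lia)
                       ltac:(unfold indom, jj; lia) ltac:(unfold indom, jj; lia)).
      assert (E := IH ltac:(lia)). fold jj in E. rewrite E in h1.
      rewrite (HP jj ltac:(unfold jj; lia)), (HP (jj+1)%Z ltac:(unfold jj; lia)) in h1.
      apply (canc_l (d i jj) _ _ _ (nzZ d Hd i jj ltac:(unfold jj; lia)) h1 h2).
Qed.

Lemma bwd i : PP (i+1) -> PP i.
Proof.
  intros HP.
  assert (H : forall K, (K <= n+3)%nat -> c i (i + Z.of_nat n + 3 - Z.of_nat K)%Z = d i (i + Z.of_nat n + 3 - Z.of_nat K)%Z).
  { induction K as [|K IH]; intros HK.
    - replace (i + Z.of_nat n + 3 - Z.of_nat 0)%Z with (i + Z.of_nat n + 3)%Z by lia.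
      rewrite (proj1 (proj2 (proj1 Hc i))), (proj1 (proj2 (proj1 Hd i))). reflexivity.
    - destruct (Nat.eq_dec (S K) (n+3)).
      + replace (i + Z.of_nat n + 3 - Z.of_nat (S K))%Z with i by lia.
        rewrite (proj1 (proj1 Hc i)), (proj1 (proj1 Hd i)). reflexivity.
      + set (jj := (i + Z.of_nat n + 3 - Z.of_nat (S K))%Z).
        assert (h1 := proj2 (proj2 Hc) i jj ltac:(unfold indom, jj; lia) ltac:(unfold indom, jj; lia)
                         ltac:(unfold indom, jj; lia) ltac:(unfold indom, jj; lia)).
        assert (h2 := proj2 (proj2 Hd) i jj ltac:(unfold indom, jj; lia) ltac:(unfold indom, jj; lia)
                         ltac:(unfold indom, jj; lia) ltac:(unfold indom, jj; lia)).
        replace (jj + 1)%Z with (i + Z.of_nat n + 3 - Z.of_nat K)%Z in h1, h2 by (unfold jj; lia).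
        rewrite (IH ltac:(lia)) in h1.
        replace (i + Z.of_nat n + 3 - Z.of_nat K)%Z with (jj + 1)%Z in h1, h2 by (unfold jj; lia).
        rewrite (HP jj ltac:(unfold jj; lia)), (HP (jj+1)%Z ltac:(unfold jj; lia)) in h1.
        apply (canc_r (d (i+1)%Z (jj+1)%Z) _ _ _ (nzZ d Hd (i+1)%Z (jj+1)%Z ltac:(unfold jj; lia)) h1 h2). }
  intros j Hj. replace j with (i + Z.of_nat n + 3 - Z.of_nat (Z.to_nat (i + Z.of_nat n + 3 - j)))%Z by lia.
  apply H. lia.
Qed.

Lemma det_unique : PP 0 -> forall i j, indom n i j -> c i j = d i j.
Proof.
  intros H0 i. revert i. apply (Z.peano_ind PP).
  - exact H0.
  - intros x Hx. replace (Z.succ x) with (x+1)%Z by lia. apply fwd; auto.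
  - intros x Hx. apply bwd. replace (Z.pred x + 1)%Z with x by lia. auto.
Qed.

End Det.

Fixpoint alltup {A : Type} (k : nat) (F : list A) : list (list A) :=
  match k with
  | O => nil :: nil
  | S k' => flat_map (fun x => map (cons x) (alltup k' F)) F
  end.

Lemma alltup_in {A : Type} (F : list A) : forall l k, length l = k ->
  (forall x, In x l -> In x F) -> In l (alltup k F).
Proof.
  induction l as [|x l IH]; intros k Hk HF; destruct k; simpl in *; try lia.
  - auto.
  - apply in_flat_map. exists x. split; auto. apply in_map. apply IH; auto.
Qed.

Lemma map_eq_at {A B : Type} (f g : A -> B) l j : map f l = map g l -> In j l -> f j = g j.
Proof.
  induction l; simpl; intros H Hj; [contradiction|].
  injection H as H1 H2. destruct Hj as [->|Hj]; auto.
Qed.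

Lemma Cnorm_sub0 w : Cnorm (Csub w Defs.C0) = Cmod w.
Proof. destruct w as [x y]. unfold Cnorm, Csub, Defs.C0, Cmod. simpl. rewrite !Rminus_0_r. reflexivity. Qed.

Theorem corollary3p8 :
  forall (Rset : Cplx -> Prop), discrete Rset ->
  forall n : nat,
    exists L : list (Z -> Z -> Cplx),
      forall c : Z -> Z -> Cplx, frieze n (nonzero_part Rset) c ->
        exists d, In d L /\ forall i j : Z, indom n i j -> c i j = d i j.
Proof.
  intros Rs Hdisc n.
  destruct (Hdisc Defs.C0) as [eps0 [He0 Hz]].
  set (eps := Rmin eps0 1).
  assert (Heps : 0 < eps) by (unfold eps; apply Rmin_glb_lt; lra).
  assert (Heps1 : eps <= 1) by apply Rmin_r.
  assert (Heps0 : eps <= eps0) by apply Rmin_l.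
  set (Bst := bnd eps (n+3) 1).
  destruct (fin_disc Rs Hdisc Bst) as [Lr HLr].
  set (F := Defs.C0 :: Defs.C1 :: Lr).
  set (diag := fun c : Z -> Z -> Cplx => map (fun j => c 0%Z (Z.of_nat j)) (seq 0 (n+4))).
  set (Fr := frieze n (nonzero_part Rs)).
  set (pick := fun t => match excluded_middle_informative (exists d, Fr d /\ diag d = t) with
                        | left h => proj1_sig (constructive_indefinite_description _ h)
                        | right _ => fun _ _ : Z => Defs.C0 end).
  exists (map pick (alltup (n+4) F)).
  intros c Hc.
  assert (HS : forall w, nonzero_part Rs w -> w <> Defs.C0) by (intros w [_ h]; exact h).
  assert (Hpoly : polyhyp (n+3) (e c) eps 1).
  { split; [|split; [|split]].
    - intros a b c' d h1 h2 h3 h4. apply (ptolemy n _ HS c Hc); lia.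
    - intros a b h1 h2.
      destruct (Nat.eq_dec b (S a)).
      { subst. rewrite (e_one n _ c Hc). rewrite Cmod_1. lra. }
      destruct (Nat.eq_dec b (a+n+2)).
      { subst. rewrite (e_one' n _ c Hc). rewrite Cmod_1. lra. }
      destruct (e_int n _ c Hc a b ltac:(lia) ltac:(lia)) as [hr hn].
      assert (h := Hz _ hr hn). rewrite Cnorm_sub0 in h. lra.
    - intros a h. rewrite (e_one n _ c Hc). rewrite Cmod_1. lra.
    - intros h. replace (n+3-1)%nat with (0+n+2)%nat by lia.
      rewrite (e_one' n _ c Hc). rewrite Cmod_1. lra. }
  assert (Hin : In (diag c) (alltup (n+4) F)).
  { apply alltup_in.
    - unfold diag. rewrite length_map, length_seq. reflexivity.
    - intros x Hx. unfold diag in Hx. apply in_map_iff in Hx as [j [<- Hj]].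
      apply in_seq in Hj. change (c 0%Z (Z.of_nat j)) with (e c 0 j).
      unfold F. simpl.
      destruct (Nat.eq_dec j 0). { subst. left. rewrite (e_diag n _ c Hc). reflexivity. }
      destruct (Nat.eq_dec j (n+3)). { subst. left. replace (n+3)%nat with (0+n+3)%nat by lia. rewrite (e_end n _ c Hc 0). reflexivity. }
      destruct (Nat.eq_dec j 1). { subst. right; left. rewrite (e_one n _ c Hc). reflexivity. }
      destruct (Nat.eq_dec j (n+2)). { subst. right; left. replace (n+2)%nat with (0+n+2)%nat by lia. rewrite (e_one' n _ c Hc 0). reflexivity. }
      right; right. apply HLr.
      + apply (e_int n _ c Hc 0 j); lia.
      + apply (poly_bound (n+3) (e c) eps 1 Heps Hpoly); lia. }
  exists (pick (diag c)). split.
  - apply in_map. exact Hin.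
  - assert (Hp : Fr (pick (diag c)) /\ diag (pick (diag c)) = diag c).
    { unfold pick. destruct (excluded_middle_informative (exists d, Fr d /\ diag d = diag c)) as [h|h].
      - destruct (constructive_indefinite_description _ h) as [d Hd]. simpl. exact Hd.
      - exfalso. apply h. exists c. split; auto. }
    destruct Hp as [Hp1 Hp2].
    apply (det_unique n _ HS c (pick (diag c)) Hc Hp1).
    intros j Hj.
    replace j with (0 + Z.of_nat (Z.to_nat j))%Z by lia. simpl.
    apply (map_eq_at (fun j => c 0%Z (Z.of_nat j)) (fun j => pick (diag c) 0%Z (Z.of_nat j)) (seq 0 (n+4))).
    + symmetry. exact Hp2.
    + apply in_seq. lia.
Qed.
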